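(* Assume $\gamma_0$ is unimodal (and symmetric about $0$) with $\sup_u|\frac{d}{du}\log\gamma_0(u)|\le\Lambda$ a.e. for some $\Lambda>0$. Then there is a constant $C>0$ depending only on $\gamma_0$ such that for all $x\in\mathbb{R}$, $w\in(0,1]$ and $c\in\mathbb{R}$, $$|\zeta(x;\theta)-x|\le C\bigl(1+\sqrt{|c|+\log(1/w)}\bigr).$$
   Context: Let $\phi$ be the standard normal density and $\gamma_0$ a probability density on $\mathbb{R}$. For $\theta=(w,c)$, $w\in(0,1]$, $c\in\mathbb{R}$, let $g(x;c)=\int\phi(x-\mu)\gamma_0(\mu-c)\,d\mu$, $m(x;\theta)=(1-w)\phi(x)+wg(x;c)$, and $\zeta(x;\theta)=x+\frac{d}{dx}\log m(x;\theta)$ (the posterior mean of $\mu$ given $X=x$ under $X\mid\mu\sim N(\mu,1)$ and prior $(1-w)\delta_0+w\gamma_0(\cdot-c)$). *)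

(* Defs.v *)
From Stdlib Require Import Reals Lra.
Open Scope R_scope.

Definition phi (x : R) : R := exp (- (x ^ 2) / 2) / sqrt (2 * PI).

Definition improper_integral (f : R -> R) (I : R) : Prop :=
  (forall a b : R, inhabited (Riemann_integrable f a b)) /\
  forall eps : R, 0 < eps -> exists M : R, forall a b : R,
    a <= - M -> M <= b ->
    forall pr : Riemann_integrable f a b, Rabs (RiemannInt pr - I) < eps.

Definition prob_density (gamma0 : R -> R) : Prop :=
  (forall u, 0 <= gamma0 u) /\ improper_integral gamma0 1.

Definition symmetric_unimodal (gamma0 : R -> R) : Prop :=
  (forall u, gamma0 (- u) = gamma0 u) /\
  (forall u v, 0 <= u -> u <= v -> gamma0 v <= gamma0 u).

(* |d/du log gamma0| <= Lambda (a.e.), read as: gamma0 > 0 and log gamma0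
   is Lambda-Lipschitz *)
Definition log_lipschitz (gamma0 : R -> R) (Lambda : R) : Prop :=
  (forall u, 0 < gamma0 u) /\
  (forall u v, Rabs (ln (gamma0 u) - ln (gamma0 v)) <= Lambda * Rabs (u - v)).

Definition is_g (gamma0 : R -> R) (c : R) (g : R -> R) : Prop :=
  forall y, improper_integral (fun mu => phi (y - mu) * gamma0 (mu - c)) (g y).

Definition marg (w : R) (g : R -> R) (y : R) : R := (1 - w) * phi y + w * g y.

(* Main.v *)
Require Import Defs.
From Stdlib Require Import Reals Lra.
From Coquelicot Require Import Coquelicot.
Open Scope R_scope.

Lemma improper_ge (f : R -> R) (I k lo hi : R) :
  improper_integral f I ->
  (forall a b (pr : Riemann_integrable f a b), a <= lo -> hi <= b -> k <= RiemannInt pr) ->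
  k <= I.
Proof.
  intros [Hi Hl] H.
  destruct (Rle_lt_dec k I) as [|Hlt]; [assumption|].
  destruct (Hl (k - I)) as [M HM]; [lra|].
  set (a := -(Rabs M + Rabs lo)). set (b := Rabs M + Rabs hi).
  destruct (Hi a b) as [pr].
  assert (Ha1 : a <= - M) by (unfold a; pose proof (Rle_abs M); pose proof (Rabs_pos lo); lra).
  assert (Ha2 : a <= lo) by (unfold a; pose proof (Rabs_pos M); pose proof (Rle_abs (-lo)); rewrite Rabs_Ropp in *; lra).
  assert (Hb1 : M <= b) by (unfold b; pose proof (Rle_abs M); pose proof (Rabs_pos hi); lra).
  assert (Hb2 : hi <= b) by (unfold b; pose proof (Rle_abs hi); pose proof (Rabs_pos M); lra).
  specialize (HM a b Ha1 Hb1 pr). specialize (H a b pr Ha2 Hb2).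
  apply Rabs_def2 in HM. lra.
Qed.

Lemma eps_le (A B K : R) : 0 <= K -> (forall eps, 0 < eps -> A < B + K * eps) -> A <= B.
Proof.
  intros HK H. destruct (Rle_lt_dec A B) as [|Hlt]; [assumption|].
  specialize (H ((A - B) / (K + 1))).
  assert (0 < (A - B) / (K + 1)) by (apply Rdiv_lt_0_compat; lra).
  specialize (H H0).
  assert (K * ((A - B) / (K + 1)) < A - B).
  { replace (K * ((A - B) / (K + 1))) with ((A - B) - (A - B) / (K + 1)) by (field; lra). lra. }
  lra.
Qed.

Lemma scalRN (a b : R) : scal (V := R_NormedModule) a b = a * b.
Proof. reflexivity. Qed.
Lemma scalRC (a b : R) : scal (V := R_CompleteNormedModule) a b = a * b.
Proof. reflexivity. Qed.
Lemma ex_RInt_shift (f : R -> R) h a b : ex_RInt f a b -> ex_RInt (fun y => f (y + h)) (a-h) (b-h).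
Proof.
  intros H.
  assert (H' : ex_RInt f (1 * (a - h) + h) (1 * (b - h) + h)).
  { replace (1 * (a - h) + h) with a by ring. replace (1 * (b - h) + h) with b by ring. exact H. }
  pose proof (ex_RInt_comp_lin (V := R_NormedModule) f 1 h (a - h) (b - h) H') as H2.
  eapply ex_RInt_ext; [|exact H2]. intros x _. simpl. rewrite scalRN. replace (1 * x + h) with (x + h) by ring. apply Rmult_1_l.
Qed.
Lemma RInt_shift (f : R -> R) h a b : ex_RInt f a b -> RInt (fun y => f (y + h)) (a-h) (b-h) = RInt f a b.
Proof.
  intros H.
  assert (H' : ex_RInt f (1 * (a - h) + h) (1 * (b - h) + h)).
  { replace (1 * (a - h) + h) with a by ring. replace (1 * (b - h) + h) with b by ring. exact H. }
  pose proof (RInt_comp_lin (V := R_CompleteNormedModule) f 1 h (a - h) (b - h) H') as H2.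
  replace (1 * (a - h) + h) with a in H2 by ring. replace (1 * (b - h) + h) with b in H2 by ring.
  rewrite <- H2. apply RInt_ext. intros x _. rewrite scalRC. replace (1 * x + h) with (x + h) by ring. symmetry; apply Rmult_1_l.
Qed.
Lemma ex_RInt_mulc (f : R -> R) K a b : ex_RInt f a b -> ex_RInt (fun y => K * f y) a b.
Proof. intros H. apply (ex_RInt_scal (V := R_NormedModule) f a b K) in H. exact H. Qed.
Lemma RInt_mulc (f : R -> R) K a b : ex_RInt f a b -> RInt (fun y => K * f y) a b = K * RInt f a b.
Proof. intros H. apply (RInt_scal (V := R_CompleteNormedModule) f a b K) in H. exact H. Qed.

Lemma improper_transl (f1 f0 : R -> R) (I1 I0 h K : R) :
  improper_integral f1 I1 -> improper_integral f0 I0 -> 0 <= K ->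
  (forall v, f1 (v + h) <= K * f0 v) -> I1 <= K * I0.
Proof.
  intros [Hi1 Hl1] [Hi0 Hl0] HK Hpt.
  apply (eps_le _ _ (K + 1)); [lra|]. intros eps Heps.
  destruct (Hl1 eps Heps) as [M1 HM1]. destruct (Hl0 eps Heps) as [M0 HM0].
  set (b := Rabs M1 + Rabs M0 + Rabs h). set (a := - b).
  pose proof (Rle_abs M1). pose proof (Rle_abs M0). pose proof (Rle_abs h).
  pose proof (Rle_abs (-h)). rewrite Rabs_Ropp in *.
  pose proof (Rabs_pos M1). pose proof (Rabs_pos M0).
  destruct (Hi1 a b) as [pr1]. destruct (Hi0 (a - h) (b - h)) as [pr0].
  specialize (HM1 a b ltac:(unfold a, b; lra) ltac:(unfold b; lra) pr1).
  specialize (HM0 (a - h) (b - h) ltac:(unfold a, b; lra) ltac:(unfold b; lra) pr0).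
  apply Rabs_def2 in HM1. apply Rabs_def2 in HM0.
  rewrite <- RInt_Reals in HM1, HM0.
  pose proof (ex_RInt_Reals_1 _ _ _ pr1) as E1.
  pose proof (ex_RInt_Reals_1 _ _ _ pr0) as E0.
  assert (Hle : RInt (fun y => f1 (y + h)) (a - h) (b - h)
               <= RInt (fun y => K * f0 y) (a - h) (b - h)).
  { apply RInt_le.
    - unfold a, b; lra.
    - apply ex_RInt_shift. exact E1.
    - apply ex_RInt_mulc. exact E0.
    - intros y _. apply Hpt. }
  rewrite RInt_mulc in Hle by exact E0. rewrite RInt_shift in Hle by exact E1.
  assert (K * RInt f0 (a - h) (b - h) <= K * (I0 + eps)) by (apply Rmult_le_compat_l; lra).
  assert (K * eps >= 0) by (apply Rle_ge; apply Rmult_le_pos; lra).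
  lra.
Qed.

Lemma plusRC (a b : R) : plus (G := R_CompleteNormedModule) a b = a + b.
Proof. reflexivity. Qed.

Lemma improper_lower (f : R -> R) (I x k : R) :
  improper_integral f I -> (forall u, 0 <= f u) ->
  (forall u, x <= u <= x + 1 -> k <= f u) -> k <= I.
Proof.
  intros HI Hpos Hk. apply (improper_ge f I k x (x + 1) HI).
  intros a b pr Ha Hb. rewrite <- RInt_Reals.
  pose proof (ex_RInt_Reals_1 _ _ _ pr) as E.
  assert (E1 : ex_RInt f a x) by (apply (ex_RInt_Chasles_1 f a x b); [lra|exact E]).
  assert (E2 : ex_RInt f x b) by (apply (ex_RInt_Chasles_2 f a x b); [lra|exact E]).
  assert (E3 : ex_RInt f x (x + 1)) by (apply (ex_RInt_Chasles_1 f x (x + 1) b); [lra|exact E2]).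
  assert (E4 : ex_RInt f (x + 1) b) by (apply (ex_RInt_Chasles_2 f x (x + 1) b); [lra|exact E2]).
  pose proof (RInt_Chasles (V := R_CompleteNormedModule) f a x b E1 E2) as C1.
  pose proof (RInt_Chasles (V := R_CompleteNormedModule) f x (x + 1) b E3 E4) as C2.
  rewrite plusRC in C1, C2.
  assert (P1 : 0 <= RInt f a x) by (apply RInt_ge_0; [lra|exact E1|intros; apply Hpos]).
  assert (P2 : 0 <= RInt f (x + 1) b) by (apply RInt_ge_0; [lra|exact E4|intros; apply Hpos]).
  assert (P3 : RInt (fun _ => k) x (x + 1) <= RInt f x (x + 1)).
  { apply RInt_le; [lra| apply ex_RInt_const | exact E3 |].
    intros u Hu. apply Hk. lra. }
  rewrite RInt_const in P3. rewrite scalRC in P3.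
  lra.
Qed.

Lemma exp_le (x y : R) : x <= y -> exp x <= exp y.
Proof. intros [H|H]; [apply Rlt_le, exp_increasing, H | subst; lra]. Qed.

Lemma gamma_ratio (gamma0 : R -> R) (Lambda : R) :
  log_lipschitz gamma0 Lambda -> forall u v, gamma0 u <= exp (Lambda * Rabs (u - v)) * gamma0 v.
Proof.
  intros [Hp Hl] u v.
  rewrite <- (exp_ln (gamma0 u)) by apply Hp. rewrite <- (exp_ln (gamma0 v)) by apply Hp.
  rewrite <- exp_plus. apply exp_le.
  pose proof (Hl u v). pose proof (Rle_abs (ln (gamma0 u) - ln (gamma0 v))). lra.
Qed.

Lemma sqrt2pi_pos : 0 < sqrt (2 * PI).
Proof. apply sqrt_lt_R0. pose proof PI_RGT_0. lra. Qed.

Lemma phi_pos (y : R) : 0 < phi y.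
Proof. unfold phi. apply Rdiv_lt_0_compat; [apply exp_pos | apply sqrt2pi_pos]. Qed.

Lemma phi_low (y : R) : Rabs y <= 1 -> exp (- / 2) / sqrt (2 * PI) <= phi y.
Proof.
  intros Hy. unfold phi, Rdiv. apply Rmult_le_compat_r.
  - left; apply Rinv_0_lt_compat, sqrt2pi_pos.
  - apply exp_le.
    assert (y ^ 2 <= 1).
    { replace (y ^ 2) with (Rabs y * Rabs y) by (rewrite <- Rabs_mult; simpl; rewrite Rmult_1_r; apply Rabs_pos_eq; nra).
      pose proof (Rabs_pos y). nra. }
    lra.
Qed.

Lemma g_transl (gamma0 : R -> R) (Lambda c : R) (g : R -> R) :
  log_lipschitz gamma0 Lambda -> is_g gamma0 c g ->
  forall x h, g (x + h) <= exp (Lambda * Rabs h) * g x.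
Proof.
  intros HL Hg x h.
  apply (improper_transl (fun mu => phi (x + h - mu) * gamma0 (mu - c))
                         (fun mu => phi (x - mu) * gamma0 (mu - c)) _ _ h).
  - apply Hg.
  - apply Hg.
  - left; apply exp_pos.
  - intros v. replace (x + h - (v + h)) with (x - v) by ring.
    pose proof (gamma_ratio gamma0 Lambda HL (v + h - c) (v - c)) as Hr.
    replace (v + h - c - (v - c)) with h in Hr by ring.
    pose proof (phi_pos (x - v)).
    replace (exp (Lambda * Rabs h) * (phi (x - v) * gamma0 (v - c)))
      with (phi (x - v) * (exp (Lambda * Rabs h) * gamma0 (v - c))) by ring.
    apply Rmult_le_compat_l; lra.
Qed.

Definition kappa (gamma0 : R -> R) (Lambda : R) : R :=
  exp (- / 2) / sqrt (2 * PI) * gamma0 0 * exp (- Lambda).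

Lemma kappa_pos gamma0 Lambda : log_lipschitz gamma0 Lambda -> 0 < kappa gamma0 Lambda.
Proof.
  intros [Hp _]. unfold kappa. pose proof (Hp 0). pose proof (exp_pos (-Lambda)).
  assert (0 < exp (- / 2) / sqrt (2 * PI)) by (apply Rdiv_lt_0_compat; [apply exp_pos | apply sqrt2pi_pos]).
  apply Rmult_lt_0_compat; [apply Rmult_lt_0_compat|]; assumption.
Qed.

Lemma g_lower (gamma0 : R -> R) (Lambda c : R) (g : R -> R) :
  0 < Lambda -> log_lipschitz gamma0 Lambda -> is_g gamma0 c g ->
  forall x, kappa gamma0 Lambda * exp (- (Lambda * (Rabs x + Rabs c))) <= g x.
Proof.
  intros HLp HL Hg x.
  apply (improper_lower (fun mu => phi (x - mu) * gamma0 (mu - c)) _ x).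
  - apply Hg.
  - intros u. pose proof (phi_pos (x - u)). pose proof (proj1 HL (u - c)). nra.
  - intros u Hu. unfold kappa.
    pose proof (gamma_ratio gamma0 Lambda HL 0 (u - c)) as Hr.
    replace (0 - (u - c)) with (c - u) in Hr by ring.
    assert (Habs : Rabs (c - u) <= Rabs x + Rabs c + 1).
    { unfold Rabs; repeat destruct Rcase_abs; lra. }
    assert (Hexp : exp (Lambda * Rabs (c - u)) <= exp (Lambda * (Rabs x + Rabs c)) * exp Lambda).
    { rewrite <- exp_plus. apply exp_le. nra. }
    pose proof (proj1 HL (u - c)).
    assert (G : gamma0 0 * exp (- Lambda) * exp (- (Lambda * (Rabs x + Rabs c))) <= gamma0 (u - c)).
    { rewrite !exp_Ropp.
      pose proof (exp_pos Lambda). pose proof (exp_pos (Lambda * (Rabs x + Rabs c))).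
      assert (gamma0 0 <= exp (Lambda * (Rabs x + Rabs c)) * exp Lambda * gamma0 (u - c)).
      { eapply Rle_trans; [exact Hr|]. apply Rmult_le_compat_r; lra. }
      apply (Rmult_le_reg_r (exp (Lambda * (Rabs x + Rabs c)) * exp Lambda)).
      { apply Rmult_lt_0_compat; lra. }
      replace (gamma0 0 * / exp Lambda * / exp (Lambda * (Rabs x + Rabs c)) *
        (exp (Lambda * (Rabs x + Rabs c)) * exp Lambda)) with (gamma0 0) by (field; lra).
      lra. }
    pose proof (phi_low (x - u) ltac:(unfold Rabs; destruct Rcase_abs; lra)).
    assert (0 <= exp (- / 2) / sqrt (2 * PI))
      by (left; apply Rdiv_lt_0_compat; [apply exp_pos | apply sqrt2pi_pos]).
    assert (0 <= gamma0 0 * exp (- Lambda) * exp (- (Lambda * (Rabs x + Rabs c)))).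
    { pose proof (proj1 HL 0). pose proof (exp_pos (- Lambda)). pose proof (exp_pos (- (Lambda * (Rabs x + Rabs c)))).
      apply Rmult_le_pos; [apply Rmult_le_pos|]; lra. }
    replace (exp (- / 2) / sqrt (2 * PI) * gamma0 0 * exp (- Lambda) * exp (- (Lambda * (Rabs x + Rabs c))))
      with (exp (- / 2) / sqrt (2 * PI) * (gamma0 0 * exp (- Lambda) * exp (- (Lambda * (Rabs x + Rabs c))))) by ring.
    apply Rmult_le_compat; assumption.
Qed.
Lemma deriv_cmp_right (f H : R -> R) x d e :
  derivable_pt_lim f x d -> derivable_pt_lim H x e -> f x = H x ->
  (forall y, x < y -> f y <= H y) -> d <= e.
Proof.
  intros Df DH Heq Hle. destruct (Rle_lt_dec d e) as [|Hlt]; [assumption|].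
  destruct (Df ((d - e) / 2) ltac:(lra)) as [d1 Hd1].
  destruct (DH ((d - e) / 2) ltac:(lra)) as [d2 Hd2].
  pose proof (cond_pos d1). pose proof (cond_pos d2).
  set (h := Rmin d1 d2 / 2).
  assert (Hm : 0 < Rmin d1 d2) by (apply Rmin_glb_lt; lra).
  assert (Hh : 0 < h) by (unfold h; lra).
  assert (Hh' : Rabs h < d1 /\ Rabs h < d2).
  { rewrite Rabs_pos_eq by lra. unfold h. pose proof (Rmin_l d1 d2). pose proof (Rmin_r d1 d2).
    lra. }
  specialize (Hd1 h ltac:(lra) (proj1 Hh')). specialize (Hd2 h ltac:(lra) (proj2 Hh')).
  apply Rabs_def2 in Hd1. apply Rabs_def2 in Hd2.
  assert ((f (x + h) - f x) / h <= (H (x + h) - H x) / h).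
  { unfold Rdiv. apply Rmult_le_compat_r; [left; apply Rinv_0_lt_compat; lra|].
    pose proof (Hle (x + h) ltac:(lra)). lra. }
  lra.
Qed.

Lemma deriv_cmp_left (f H : R -> R) x d e :
  derivable_pt_lim f x d -> derivable_pt_lim H x e -> f x = H x ->
  (forall y, y < x -> f y <= H y) -> e <= d.
Proof.
  intros Df DH Heq Hle. destruct (Rle_lt_dec e d) as [|Hlt]; [assumption|].
  destruct (Df ((e - d) / 2) ltac:(lra)) as [d1 Hd1].
  destruct (DH ((e - d) / 2) ltac:(lra)) as [d2 Hd2].
  pose proof (cond_pos d1). pose proof (cond_pos d2).
  assert (Hm : 0 < Rmin d1 d2) by (apply Rmin_glb_lt; lra).
  set (h := - (Rmin d1 d2 / 2)).
  assert (Hh' : Rabs h < d1 /\ Rabs h < d2).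
  { unfold h. rewrite Rabs_Ropp. rewrite Rabs_pos_eq by lra. pose proof (Rmin_l d1 d2). pose proof (Rmin_r d1 d2). lra. }
  assert (Hh : h < 0) by (unfold h; lra).
  specialize (Hd1 h ltac:(lra) (proj1 Hh')). specialize (Hd2 h ltac:(lra) (proj2 Hh')).
  apply Rabs_def2 in Hd1. apply Rabs_def2 in Hd2.
  assert ((H (x + h) - H x) / h <= (f (x + h) - f x) / h).
  { unfold Rdiv. replace (/ h) with (- / (- h)) by (field; lra).
    assert (Hu : 0 < / (- h)) by (apply Rinv_0_lt_compat; lra).
    pose proof (Hle (x + h) ltac:(lra)).
    assert ((f (x + h) - f x) * / (- h) <= (H (x + h) - H x) * / (- h))
      by (apply Rmult_le_compat_r; lra).
    lra. }
  lra.
Qed.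

Lemma derivable_pt_lim_ext' (f g : R -> R) x l :
  (forall y, f y = g y) -> derivable_pt_lim f x l -> derivable_pt_lim g x l.
Proof.
  intros E D eps Heps. destruct (D eps Heps) as [d Hd]. exists d. intros h H1 H2.
  rewrite <- !E. apply Hd; assumption.
Qed.

Lemma sqrt2pi_pos' : 0 < sqrt (2 * PI).
Proof. apply sqrt_lt_R0. pose proof PI_RGT_0. lra. Qed.

Lemma phi_deriv y : derivable_pt_lim phi y (- y * phi y).
Proof.
  apply is_derive_Reals. unfold phi. auto_derive; [auto|].
  replace (- (y * (y * 1)) * / 2) with (- y ^ 2 / 2) by (unfold Rdiv; ring).
  pose proof sqrt2pi_pos'. field. lra.
Qed.

Lemma g_pos gamma0 Lambda c g : 0 < Lambda -> log_lipschitz gamma0 Lambda -> is_g gamma0 c g ->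
  forall y, 0 < g y.
Proof.
  intros H1 H2 H3 y. eapply Rlt_le_trans; [|apply (g_lower gamma0 Lambda c g H1 H2 H3 y)].
  apply Rmult_lt_0_compat; [apply kappa_pos; auto | apply exp_pos].
Qed.

Lemma key gamma0 Lambda x w c g l :
  0 < Lambda -> log_lipschitz gamma0 Lambda -> 0 < w -> w <= 1 -> is_g gamma0 c g ->
  derivable_pt_lim (fun y => ln (marg w g y)) x l ->
  Rabs l * marg w g x <= Rabs x * ((1 - w) * phi x) + Lambda * marg w g x.
Proof.
  intros HLp HL Hw0 Hw1 Hg Hd.
  pose proof (g_pos gamma0 Lambda c g HLp HL Hg) as Gp.
  assert (Mp : forall y, 0 < marg w g y).
  { intros y. unfold marg. pose proof (phi_pos y). pose proof (Gp y).
    assert (0 <= (1 - w) * phi y) by (apply Rmult_le_pos; lra).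
    assert (0 < w * g y) by (apply Rmult_lt_0_compat; lra). lra. }
  assert (Dm : derivable_pt_lim (marg w g) x (marg w g x * l)).
  { pose proof (derivable_pt_lim_comp (fun y => ln (marg w g y)) exp x l (exp (ln (marg w g x)))
      Hd (derivable_pt_lim_exp _)) as D.
    rewrite exp_ln in D by apply Mp.
    eapply derivable_pt_lim_ext'; [|exact D]. intros y. unfold comp. apply exp_ln, Mp. }
  set (gx := g x).
  assert (DR : derivable_pt_lim (fun y => (1 - w) * phi y + w * gx * exp (Lambda * (y - x))) x
                 ((1 - w) * (- x * phi x) + w * gx * Lambda)).
  { apply is_derive_Reals. unfold phi. auto_derive; [auto|].
    try replace (x + - x) with 0 by ring. try replace (- x + x) with 0 by ring. try replace (x - x) with 0 by ring.
    rewrite Rmult_0_r, exp_0.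
    pose proof sqrt2pi_pos. replace (- (x * (x * 1)) * / 2) with (- x ^ 2 / 2) by (unfold Rdiv; ring).
    field. lra. }
  assert (DL : derivable_pt_lim (fun y => (1 - w) * phi y + w * gx * exp (Lambda * (x - y))) x
                 ((1 - w) * (- x * phi x) - w * gx * Lambda)).
  { apply is_derive_Reals. unfold phi. auto_derive; [auto|].
    try replace (x + - x) with 0 by ring. try replace (- x + x) with 0 by ring. try replace (x - x) with 0 by ring.
    rewrite Rmult_0_r, exp_0.
    pose proof sqrt2pi_pos. replace (- (x * (x * 1)) * / 2) with (- x ^ 2 / 2) by (unfold Rdiv; ring).
    field. lra. }
  assert (U : marg w g x * l <= (1 - w) * (- x * phi x) + w * gx * Lambda).
  { apply (deriv_cmp_right _ _ x _ _ Dm DR).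
    - unfold marg, gx. replace (x - x) with 0 by ring. rewrite Rmult_0_r, exp_0. ring.
    - intros y Hy. unfold marg. pose proof (g_transl gamma0 Lambda c g HL Hg x (y - x)) as T.
      replace (x + (y - x)) with y in T by ring. fold gx in T. rewrite Rabs_pos_eq in T by lra.
      assert (w * g y <= w * (exp (Lambda * (y - x)) * gx)) by (apply Rmult_le_compat_l; lra).
      lra. }
  assert (L : (1 - w) * (- x * phi x) - w * gx * Lambda <= marg w g x * l).
  { apply (deriv_cmp_left _ _ x _ _ Dm DL).
    - unfold marg, gx. replace (x - x) with 0 by ring. rewrite Rmult_0_r, exp_0. ring.
    - intros y Hy. unfold marg. pose proof (g_transl gamma0 Lambda c g HL Hg x (y - x)) as T.
      replace (x + (y - x)) with y in T by ring. fold gx in T. rewrite Rabs_left in T by lra.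
      replace (- (y - x)) with (x - y) in T by ring.
      assert (w * g y <= w * (exp (Lambda * (x - y)) * gx)) by (apply Rmult_le_compat_l; lra).
      lra. }
  pose proof (Mp x) as Mx. pose proof (Gp x) as Gx. fold gx in Gx.
  assert (Pp : 0 <= (1 - w) * phi x) by (pose proof (phi_pos x); apply Rmult_le_pos; lra).
  assert (Wg : w * gx <= marg w g x).
  { unfold marg. fold gx. lra. }
  rewrite <- (Rabs_pos_eq (marg w g x)) at 1 by lra. rewrite <- Rabs_mult.
  rewrite Rmult_comm. apply Rabs_le. pose proof (Rle_abs x). pose proof (Rle_abs (- x)).
  rewrite Rabs_Ropp in *.
  assert (x * ((1 - w) * phi x) <= Rabs x * ((1 - w) * phi x)) by (apply Rmult_le_compat_r; lra).
  assert (- x * ((1 - w) * phi x) <= Rabs x * ((1 - w) * phi x)) by (apply Rmult_le_compat_r; lra).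
  assert (w * gx * Lambda <= Lambda * marg w g x) by nra.
  split; nra.
Qed.

Lemma sqrt_plus_le u v : 0 <= u -> 0 <= v -> sqrt (u + v) <= sqrt u + sqrt v.
Proof.
  intros Hu Hv. rewrite <- (sqrt_square (sqrt u + sqrt v)) by (pose proof (sqrt_pos u); pose proof (sqrt_pos v); lra).
  apply sqrt_le_1_alt. pose proof (sqrt_sqrt u Hu). pose proof (sqrt_sqrt v Hv).
  pose proof (sqrt_pos u). pose proof (sqrt_pos v). nra.
Qed.

Lemma ln_le0 w : 0 < w -> w <= 1 -> ln w <= 0.
Proof.
  intros H0 H1. destruct (Rle_lt_dec (ln w) 0) as [|H]; [assumption|].
  apply exp_increasing in H. rewrite exp_ln in H by lra. rewrite exp_0 in H. lra.
Qed.

Lemma ln_inv_w w : 0 < w -> ln (1 / w) = - ln w.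
Proof. intros H. unfold Rdiv. rewrite Rmult_1_l. apply ln_Rinv, H. Qed.

Definition K0 gamma0 Lambda := Rabs (ln (kappa gamma0 Lambda * sqrt (2 * PI))).
Definition Sdef gamma0 Lambda w c := Lambda * Rabs c + ln (1 / w) + K0 gamma0 Lambda.
Definition Rdef gamma0 Lambda w c := 4 * (Lambda + 1) + 2 * sqrt (Sdef gamma0 Lambda w c) + 1.

Lemma x_bound gamma0 Lambda x w c g :
  0 < Lambda -> log_lipschitz gamma0 Lambda -> 0 < w -> w <= 1 -> is_g gamma0 c g ->
  Rabs x * ((1 - w) * phi x) <= Rdef gamma0 Lambda w c * marg w g x.
Proof.
  intros HLp HL Hw0 Hw1 Hg.
  pose proof (g_pos gamma0 Lambda c g HLp HL Hg x) as Gx.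
  pose proof (phi_pos x) as Px.
  assert (Hlw : 0 <= ln (1 / w)) by (rewrite ln_inv_w by lra; pose proof (ln_le0 w Hw0 Hw1); lra).
  assert (HS : 0 <= Sdef gamma0 Lambda w c).
  { unfold Sdef, K0. pose proof (Rabs_pos c). pose proof (Rabs_pos (ln (kappa gamma0 Lambda * sqrt (2 * PI)))). nra. }
  pose proof (sqrt_pos (Sdef gamma0 Lambda w c)) as HsS.
  set (R := Rdef gamma0 Lambda w c).
  assert (HR1 : 1 <= R) by (unfold R, Rdef; lra).
  pose proof (Rabs_pos x) as Hx0.
  assert (Pp : 0 <= (1 - w) * phi x) by (apply Rmult_le_pos; lra).
  assert (Wg : 0 < w * g x) by (apply Rmult_lt_0_compat; lra).
  destruct (Rle_lt_dec (Rabs x) R) as [Hle|Hgt].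
  - unfold marg. assert (Rabs x * ((1 - w) * phi x) <= R * ((1 - w) * phi x)) by (apply Rmult_le_compat_r; lra).
    nra.
  - set (t := Rabs x) in *.
    set (sK := kappa gamma0 Lambda * sqrt (2 * PI)).
    assert (HsK : 0 < sK) by (unfold sK; apply Rmult_lt_0_compat; [apply kappa_pos; auto | apply sqrt2pi_pos]).
    assert (Hx2 : x ^ 2 = t * t) by (unfold t; rewrite <- Rabs_mult; simpl; rewrite Rmult_1_r;
                                     rewrite Rabs_pos_eq; [reflexivity | nra]).
    assert (Hineq : t + - x ^ 2 / 2 + Lambda * (t + Rabs c) <= ln w + ln sK).
    { rewrite Hx2.
      assert (Hk : - ln sK <= K0 gamma0 Lambda) by (unfold K0; fold sK; pose proof (Rle_abs (- ln sK)); rewrite Rabs_Ropp in *; lra).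
      assert (Ht1 : 4 * (Lambda + 1) <= t) by (unfold R, Rdef in Hgt; lra).
      assert (Ht2 : 2 * sqrt (Sdef gamma0 Lambda w c) <= t) by (unfold R, Rdef in Hgt; lra).
      pose proof (sqrt_sqrt _ HS) as Hss.
      assert (4 * Sdef gamma0 Lambda w c <= t * t) by nra.
      assert ((Lambda + 1) * t <= t * t / 4) by nra.
      unfold Sdef in *. rewrite ln_inv_w in * by lra.
      replace (- (t * t) / 2) with (- (t * t / 2)) by field. lra. }
    apply exp_le in Hineq. rewrite (exp_plus (ln w) (ln sK)), exp_ln, exp_ln in Hineq by lra.
    rewrite !exp_plus in Hineq.
    set (E1 := exp (- x ^ 2 / 2)) in *. set (Ea := exp (Lambda * (t + Rabs c))) in *.
    assert (HE1 : 0 < E1) by apply exp_pos. assert (HEa : 0 < Ea) by apply exp_pos.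
    assert (Ht : t <= exp t) by (pose proof (exp_ineq1_le t); lra).
    pose proof (exp_pos t).
    pose proof (g_lower gamma0 Lambda c g HLp HL Hg x) as GL. fold t in GL.
    assert (Hena : exp (- (Lambda * (t + Rabs c))) * Ea = 1).
    { unfold Ea. rewrite <- exp_plus. replace (- (Lambda * (t + Rabs c)) + Lambda * (t + Rabs c)) with 0 by ring. apply exp_0. }
    set (Ena := exp (- (Lambda * (t + Rabs c)))) in *.
    assert (HEna : 0 < Ena) by apply exp_pos.
    assert (Hphi : phi x = E1 / sqrt (2 * PI)) by reflexivity.
    pose proof sqrt2pi_pos as Hs.
    assert (Key1 : exp t * E1 <= w * sK * Ena).
    { apply (Rmult_le_reg_r Ea); [lra|].
      replace (w * sK * Ena * Ea) with (w * sK) by (rewrite Rmult_assoc, Hena; ring). lra. }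
    assert (Key2 : t * phi x <= w * g x).
    { rewrite Hphi. unfold sK in Key1.
      apply (Rmult_le_reg_r (sqrt (2 * PI))); [lra|].
      replace (t * (E1 / sqrt (2 * PI)) * sqrt (2 * PI)) with (t * E1) by (field; lra).
      assert (t * E1 <= exp t * E1) by (apply Rmult_le_compat_r; lra).
      assert (w * (kappa gamma0 Lambda * Ena) <= w * g x) by (apply Rmult_le_compat_l; lra).
      nra. }
    unfold marg.
    assert (t * ((1 - w) * phi x) <= t * phi x) by (apply Rmult_le_compat_l; nra).
    nra.
Qed.

Theorem mainTheorem9 (gamma0 : R -> R) (Lambda : R) :
  prob_density gamma0 ->
  symmetric_unimodal gamma0 ->
  0 < Lambda ->
  log_lipschitz gamma0 Lambda ->
  exists C : R, 0 < C /\
    forall (x w c : R) (g : R -> R) (l : R),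
      0 < w -> w <= 1 ->
      is_g gamma0 c g ->
      derivable_pt_lim (fun y => ln (marg w g y)) x l ->
      Rabs l <= C * (1 + sqrt (Rabs c + ln (1 / w))).
Proof.
  intros _ _ HLp HL.
  set (k0 := K0 gamma0 Lambda).
  exists (Lambda + 4 * (Lambda + 1) + 1 + 2 * sqrt k0 + 2 * sqrt (Lambda + 1)).
  pose proof (sqrt_pos k0). pose proof (sqrt_pos (Lambda + 1)).
  split; [lra|].
  intros x w c g l Hw0 Hw1 Hg Hd.
  pose proof (key gamma0 Lambda x w c g l HLp HL Hw0 Hw1 Hg Hd) as Hk.
  pose proof (x_bound gamma0 Lambda x w c g HLp HL Hw0 Hw1 Hg) as Hx.
  assert (Mp : 0 < marg w g x).
  { unfold marg. pose proof (phi_pos x). pose proof (g_pos gamma0 Lambda c g HLp HL Hg x).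
    assert (0 <= (1 - w) * phi x) by (apply Rmult_le_pos; lra).
    assert (0 < w * g x) by (apply Rmult_lt_0_compat; lra). lra. }
  assert (Hl : Rabs l <= Rdef gamma0 Lambda w c + Lambda).
  { apply (Rmult_le_reg_r (marg w g x)); [lra|]. lra. }
  assert (Hlw : 0 <= ln (1 / w)) by (rewrite ln_inv_w by lra; pose proof (ln_le0 w Hw0 Hw1); lra).
  set (T := Rabs c + ln (1 / w)).
  assert (HT : 0 <= T) by (unfold T; pose proof (Rabs_pos c); lra).
  pose proof (sqrt_pos T).
  assert (Hk0 : 0 <= k0) by (unfold k0, K0; apply Rabs_pos).
  assert (HS : sqrt (Sdef gamma0 Lambda w c) <= sqrt (Lambda + 1) * sqrt T + sqrt k0).
  { unfold Sdef. fold k0.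
    assert (0 <= Lambda * Rabs c + ln (1 / w)) by (pose proof (Rabs_pos c); nra).
    eapply Rle_trans; [apply sqrt_plus_le; lra|].
    rewrite <- sqrt_mult_alt by lra.
    apply Rplus_le_compat_r. apply sqrt_le_1_alt. unfold T. pose proof (Rabs_pos c). nra. }
  unfold Rdef in Hl. fold T.
  assert (2 * sqrt (Lambda + 1) * sqrt T <= (Lambda + 4 * (Lambda + 1) + 1 + 2 * sqrt k0 + 2 * sqrt (Lambda + 1)) * sqrt T)
    by (apply Rmult_le_compat_r; lra).
  rewrite Rmult_plus_distr_l, Rmult_1_r. lra.
Qed.
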